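(* Suppose $w$ satisfies (A1) and that (A2s) holds for every $\delta\in(0,1/2)$. Then there is a constant $C>0$ independent of $\delta$ such that for every $\delta\in(0,1/2)$ and every $x\in\Omega$, $a_\delta(x)-\int_0^1\widetilde w_\delta(x,y)\,dy\ \ge\ C\,\delta\, b_\delta(x).$
   Context: Throughout, $\Omega=(0,1)$, $\delta\in(0,1/2)$, $|\cdot|$ applied to a set denotes Lebesgue measure, and $\chi_A$ denotes the indicator function of a set $A$. A function $w:[0,\infty)\to[0,\infty)$ satisfies (A1) if $w$ is continuous and nonincreasing on $[0,1)$, positive on $(0,1)$, $w(r)=0$ for $r\ge 1$, and $\int_{\mathbb R} w(|z|)|z|^2\,dz=2$. Set $w_\delta(x,y)=\delta^{-3}w(|x-y|/\delta)$, $a_\delta(x)=\int_0^1 w_\delta(x,y)\,dy$, and $b_\delta(x)=\frac{2}{(x+\delta)^2}\int_{x-\delta}^{0}(x-y)w_\delta(x,y)\,dy$ for $x\in(0,\delta)$, $b_\delta(x)=\frac{2}{(1-x+\delta)^2}\int_{1}^{x+\delta}(y-x)w_\delta(x,y)\,dy$ for $x\in(1-\delta,1)$, and $b_\delta(x)=0$ otherwise. Define $\widetilde w_\delta(x,y)=|w_\delta(x,y)-b_\delta(x)\chi_{(0,\delta)}(|y-x|)|$. Condition (A2s) (for a given $\delta$): for every $x\in\Omega$, $|\{y\in\Omega: w_\delta(x,y)-b_\delta(x)\chi_{[0,\delta]}(|y-x|)\ge 0\}|\ \ge\ |\{y\in\Omega: w_\delta(x,y)-b_\delta(x)\chi_{[0,\delta]}(|y-x|)\le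 0\}|$. *)

(* Defs.v *)
From HB Require Import structures.
From mathcomp Require Import all_boot all_order all_algebra.
From mathcomp Require Import all_classical all_reals all_analysis.
Set Implicit Arguments. Unset Strict Implicit. Unset Printing Implicit Defensive.
Import Order.TTheory GRing.Theory Num.Theory.
Import numFieldNormedType.Exports.
Local Open Scope classical_set_scope.
Local Open Scope ring_scope.

Section Defs.
Variable R : realType.
Local Notation mu := (@lebesgue_measure R).

(* Assumption (A1) on the kernel w : [0,oo) -> [0,oo) (values at negative
   arguments are irrelevant: w is only ever evaluated at nonnegative reals). *)
Definition A1 (w : R -> R) : Prop :=
  (forall r, 0 <= r -> 0 <= w r) /\
  [/\ {within `[0, 1[, continuous w},
      (forall r s, 0 <= r -> r <= s -> s < 1 -> w s <= w r),
      (forall r, 0 < r < 1 -> 0 < w r),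
      (forall r, 1 <= r -> w r = 0)
    & (\int[mu]_(z in [set: R]) (w `|z| * z ^+ 2)%:E = 2%:E)%E].

Definition w_d (w : R -> R) (d x y : R) : R := d ^- 3 * w (`|x - y| / d).

Definition a_d (w : R -> R) (d x : R) : R :=
  Rintegral mu `]0, 1[ (fun y => w_d w d x y).

Definition b_d (w : R -> R) (d x : R) : R :=
  if (0 < x) && (x < d) then
    2 / (x + d) ^+ 2 * Rintegral mu `[x - d, 0] (fun y => (x - y) * w_d w d x y)
  else if (1 - d < x) && (x < 1) then
    2 / (1 - x + d) ^+ 2 * Rintegral mu `[1, x + d] (fun y => (y - x) * w_d w d x y)
  else 0.

Definition chi (A : set R) (r : R) : R := \1_A r.

Definition wt_d (w : R -> R) (d x y : R) : R :=
  `| w_d w d x y - b_d w d x * chi `]0, d[ `|y - x| |.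

Definition A2s_ge (w : R -> R) (d x : R) : set R :=
  [set y | 0 < y < 1 /\ 0 <= w_d w d x y - b_d w d x * chi `[0, d] `|y - x|].
Definition A2s_le (w : R -> R) (d x : R) : set R :=
  [set y | 0 < y < 1 /\ w_d w d x y - b_d w d x * chi `[0, d] `|y - x| <= 0].
Definition A2s (w : R -> R) (d : R) : Prop :=
  forall x, 0 < x < 1 -> (mu (A2s_le w d x) <= mu (A2s_ge w d x))%E.

End Defs.

(* Main.v *)
Require Import Defs.
From HB Require Import structures.
From mathcomp Require Import all_boot all_order all_algebra.
From mathcomp Require Import all_classical all_reals all_analysis.
From mathcomp Require Import ring lra measurable_realfun.
Import Order.TTheory GRing.Theory Num.Theory.
Import numFieldNormedType.Exports.
Local Open Scope classical_set_scope.
Local Open Scope ring_scope.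

Lemma w_ge0 {R : realType} {w : R -> R} : A1 w -> forall r, 0 <= r -> 0 <= w r.
Proof. by case. Qed.

Lemma w_mono {R : realType} {w : R -> R} : A1 w ->
  forall r s, 0 <= r -> r <= s -> w s <= w r.
Proof.
move=> hw r s r0 rs; have [_ [_ hm _ h1 _]] := hw.
have [s1|s1] := ltP s 1; first exact: hm.
by rewrite h1 // w_ge0.
Qed.

Lemma measurable_wd {R : realType} {w : R -> R} (d x : R) : A1 w -> 0 < d ->
  measurable_fun setT (fun y => w_d w d x y).
Proof.
move=> hw d0.
pose v := fun r : R => w (Num.max r 0).
have vni : {homo v : n m / (n <= m)%O >-> (n >= m)%O}.
  move=> r s rs; rewrite /v /=.
  have h := @w_mono R w hw (Num.max r 0) (Num.max s 0).
  apply: h; first by rewrite le_max lexx orbT.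
  by rewrite ge_max !le_max lexx orbT (le_trans rs) // le_max lexx.
have mv : measurable_fun setT v by exact: nonincreasing_measurable.
have -> : (fun y => w_d w d x y) = (fun y => d ^- 3 * v (`|x - y| / d)).
  apply/funext => y; rewrite /w_d /v; congr (_ * w _).
  by rewrite max_l // divr_ge0 // ltW.
apply: measurable_funM => //.
apply: measurableT_comp => //.
apply: measurable_funM => //.
apply: measurableT_comp => //.
exact: measurable_funB.
Qed.

Notation mu := (@lebesgue_measure _).

Lemma integ_bd {R : realType} (D : set R) (f : R -> R) (M : R) :
  measurable D -> (@lebesgue_measure R D < +oo)%E -> measurable_fun setT f ->
  (forall y, D y -> `|f y| <= M) -> (@lebesgue_measure R).-integrable D (EFin \o f).
Proof.
move=> mD Dfin mf hM; apply: measurable_bounded_integrable => //.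
  exact: measurable_funS mf.
rewrite /bounded_near; near=> K => y /= Dy.
by rewrite (le_trans (hM y Dy)) //; near: K; apply: nbhs_pinfty_ge.
Unshelve. all: end_near.
Qed.

Lemma mu_itv_cc {R : realType} (a b : R) : a <= b ->
  fine (@lebesgue_measure R `[a, b]) = b - a.
Proof.
move=> ab; rewrite lebesgue_measure_itv /=.
case: ltP => [ab'|ba] //=.
rewrite lee_fin in ba.
have -> : b = a by apply/le_anti; rewrite ba ab.
by rewrite subrr.
Qed.

Lemma wd_ge0 {R : realType} {w : R -> R} d x y : A1 w -> 0 < d -> 0 <= w_d w d x y.
Proof.
move=> hw d0; rewrite /w_d mulr_ge0 //; first by rewrite invr_ge0 exprn_ge0 // ltW.
by apply: (w_ge0 hw); rewrite divr_ge0 // ltW.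
Qed.

Lemma wd_mono {R : realType} {w : R -> R} d x y z : A1 w -> 0 < d ->
  `|x - y| <= `|x - z| -> w_d w d x z <= w_d w d x y.
Proof.
move=> hw d0 h; rewrite /w_d ler_wpM2l //; first by rewrite invr_ge0 exprn_ge0 // ltW.
apply: (w_mono hw); first by rewrite divr_ge0 // ltW.
by rewrite ler_pM2r // invr_gt0.
Qed.

Lemma wd_le {R : realType} {w : R -> R} d x y : A1 w -> 0 < d ->
  w_d w d x y <= d ^- 3 * w 0.
Proof.
move=> hw d0; rewrite /w_d ler_wpM2l //; first by rewrite invr_ge0 exprn_ge0 // ltW.
by apply: (w_mono hw); rewrite // divr_ge0 // ltW.
Qed.

Lemma wd_lb {R : realType} {w : R -> R} d x y r : A1 w -> 0 < d ->
  `|x - y| <= r * d -> d ^- 3 * w r <= w_d w d x y.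
Proof.
move=> hw d0 h; rewrite /w_d ler_wpM2l //; first by rewrite invr_ge0 exprn_ge0 // ltW.
apply: (w_mono hw); first by rewrite divr_ge0 // ltW.
by rewrite ler_pdivrMr.
Qed.

Lemma mu_cc_fin {R : realType} (a b : R) : (@lebesgue_measure R `[a, b] < +oo)%E.
Proof. by rewrite lebesgue_measure_itv; case: ifP => _ //=; rewrite ltry. Qed.

Lemma b_ge0 {R : realType} {w : R -> R} d x : A1 w -> 0 < d -> 0 <= b_d w d x.
Proof.
move=> hw d0; rewrite /b_d.
case: ifP => [/andP[x0 xd]|_].
  apply: mulr_ge0; first by rewrite divr_ge0 // exprn_ge0 // ltW // addr_gt0.
  apply: Rintegral_ge0 => y /=; rewrite in_itv /= => /andP[_ y0].
  by rewrite mulr_ge0 ?wd_ge0 // subr_ge0 (le_trans y0) // ltW.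
case: ifP => [/andP[x0 x1]|_] //.
apply: mulr_ge0; first by rewrite divr_ge0 // exprn_ge0 // ltW // addr_gt0 // subr_gt0.
apply: Rintegral_ge0 => y /=; rewrite in_itv /= => /andP[y1 _].
by rewrite mulr_ge0 ?wd_ge0 // subr_ge0 (le_trans _ y1) // ltW.
Qed.

Lemma Rint_bound {R : realType} (D : set R) (f : R -> R) (c : R) :
  measurable D -> (@lebesgue_measure R D < +oo)%E -> measurable_fun setT f ->
  (forall y, D y -> 0 <= f y <= c) ->
  Rintegral (@lebesgue_measure R) D f <= c * fine (@lebesgue_measure R D).
Proof.
move=> mD Dfin mf hf.
rewrite -Rintegral_cst //; apply: le_Rintegral => //.
- apply: (@integ_bd _ _ _ c) => // y Dy; have /andP[f0 fc] := hf y Dy.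
  by rewrite ger0_norm.
- apply: (@integ_bd _ _ _ `|c|) => //.
- by move=> y /hf /andP[].
Qed.

Lemma b_le {R : realType} {w : R -> R} d x : A1 w -> 0 < d ->
  b_d w d x <= 2 * (d ^- 3 * w 0).
Proof.
move=> hw d0; set K := d ^- 3 * w 0.
have K0 : 0 <= K by rewrite (le_trans (wd_ge0 d x x hw d0)) // (wd_le d x x hw d0).
have mwd := measurable_wd d x hw d0.
rewrite /b_d.
case: ifP => [/andP[x0 xd]|_].
  have hI : Rintegral mu `[x - d, 0] (fun y => (x - y) * w_d w d x y) <= (d * K) * d.
    apply: (le_trans (@Rint_bound R `[x - d, 0] _ (d * K) _ (mu_cc_fin _ _) _ _)) => //.
    - apply: measurable_funM => //; exact: measurable_funB.
    - move=> y /=; rewrite in_itv /= => /andP[yl y0].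
      rewrite mulr_ge0 ?wd_ge0 //=; last by lra.
      apply: ler_pM; rewrite ?wd_ge0 ?wd_le //; lra.
    rewrite mu_itv_cc; last by lra.
    apply: ler_wpM2l; [by rewrite mulr_ge0 // ltW | lra].
  have xd0 : 0 < (x + d) ^+ 2 by rewrite exprn_gt0 // addr_gt0.
  apply: (le_trans (ler_wpM2l _ hI)); first by rewrite divr_ge0 // ltW.
  have -> : 2 / (x + d) ^+ 2 * (d * K * d) = 2 * ((K * d ^+ 2) / (x + d) ^+ 2) by ring.
  apply: ler_wpM2l => //; rewrite ler_pdivrMr //; apply: ler_wpM2l => //.
  by rewrite lerXn2r // ?nnegrE; lra.
case: ifP => [/andP[x0 x1]|_]; last by rewrite mulr_ge0 // ltW.
have hI : Rintegral mu `[1, x + d] (fun y => (y - x) * w_d w d x y) <= (d * K) * d.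
  apply: (le_trans (@Rint_bound R `[1, x + d] _ (d * K) _ (mu_cc_fin _ _) _ _)) => //.
  - apply: measurable_funM => //; apply: measurable_funB => //.
  - move=> y /=; rewrite in_itv /= => /andP[yl y0].
    rewrite mulr_ge0 ?wd_ge0 //=; last by lra.
    apply: ler_pM; rewrite ?wd_ge0 ?wd_le //; lra.
  rewrite mu_itv_cc; last by lra.
  apply: ler_wpM2l; [by rewrite mulr_ge0 // ltW | lra].
have xd0 : 0 < (1 - x + d) ^+ 2 by rewrite exprn_gt0 // addr_gt0 // subr_gt0.
apply: (le_trans (ler_wpM2l _ hI)); first by rewrite divr_ge0 // ltW.
have -> : 2 / (1 - x + d) ^+ 2 * (d * K * d) = 2 * ((K * d ^+ 2) / (1 - x + d) ^+ 2) by ring.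
apply: ler_wpM2l => //; rewrite ler_pdivrMr //; apply: ler_wpM2l => //.
by rewrite lerXn2r // ?nnegrE; lra.
Qed.

Lemma indic1 {R : realType} (A : set R) y : A y -> \1_A y = 1 :> R.
Proof. by move=> Ay; rewrite indicE mem_set. Qed.

Lemma indic0 {R : realType} (A : set R) y : ~ A y -> \1_A y = 0 :> R.
Proof. by move=> Ay; rewrite indicE memNset. Qed.

Lemma finD {R : realType} (S : set R) : measurable S -> S `<=` `]0, 1[ ->
  @lebesgue_measure R S \is a fin_num.
Proof.
move=> mS sS; rewrite ge0_fin_numE //.
have h := (@le_measure _ _ _ (@lebesgue_measure R) S `]0, 1[%classic (mem_set mS) (mem_set _) sS).
apply: (le_lt_trans (h _)); first exact: measurable_itv.
have := @lebesgue_measure_itv R `]0, 1[. rewrite /= lte_fin ltr01 => ->. by rewrite ltry.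
Qed.

Lemma Rint_indic {R : realType} (D A : set R) : measurable D -> measurable A ->
  Rintegral (@lebesgue_measure R) D (fun y => \1_A y) = fine (@lebesgue_measure R (A `&` D)).
Proof. by move=> mD mA; rewrite /Rintegral integral_indic. Qed.

Lemma mchi {R : realType} (A : set R) x : measurable A ->
  measurable_fun setT (fun y : R => chi A `|y - x|).
Proof.
move=> mA; rewrite /chi; apply: measurableT_comp; first exact: measurable_indic.
apply: measurableT_comp => //; exact: measurable_funB.
Qed.

Lemma mdist {R : realType} (x : R) B : measurable B ->
  measurable ((fun y : R => `|y - x|) @^-1` B).
Proof.
move=> mB; rewrite -[X in measurable X]setTI.
have md : measurable_fun setT (fun y : R => `|y - x|).
  apply: measurableT_comp => //; exact: measurable_funB.
exact: md.
Qed.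

Lemma muD_fin {R : realType} : (@lebesgue_measure R (`]0%R, 1%R[%classic : set R) < +oo)%E.
Proof.
have := @lebesgue_measure_itv R `]0, 1[. rewrite /= lte_fin ltr01 => ->. by rewrite ltry.
Qed.

Lemma chi_le1 {R : realType} (A : set R) r : 0 <= chi A r <= 1.
Proof. by rewrite /chi indicE; case: (_ \in _) => /=; rewrite ?lexx ?ler01. Qed.

Lemma a_minus {R : realType} {w : R -> R} d x : A1 w -> 0 < d ->
  a_d w d x - Rintegral (@lebesgue_measure R) `]0, 1[ (fun y => wt_d w d x y) =
  Rintegral (@lebesgue_measure R) `]0, 1[ (fun y => w_d w d x y - wt_d w d x y).
Proof.
move=> hw d0; set K := d ^- 3 * w 0.
have mwd := measurable_wd d x hw d0.
have hK y : `|w_d w d x y| <= K by rewrite ger0_norm ?wd_ge0 ?wd_le.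
rewrite /a_d RintegralB //.
- apply: (@integ_bd _ _ _ K) => //; exact: muD_fin.
- apply: (@integ_bd _ _ _ (K + `|b_d w d x|)) => //; first exact: muD_fin.
    rewrite /wt_d; apply: measurableT_comp => //; apply: measurable_funB => //.
    by apply: measurable_funM => //; exact: mchi.
  move=> y _; rewrite /wt_d normr_id (le_trans (ler_normB _ _)) // lerD // normrM.
  have /andP[c0 c1] := chi_le1 `]0, d[ `|y - x|.
  by rewrite -[leRHS]mulr1 ler_wpM2l // ger0_norm.
Qed.

Lemma wd_far {R : realType} {w : R -> R} d x y : A1 w -> 0 < d ->
  d <= `|y - x| -> w_d w d x y = 0.
Proof.
move=> hw d0 h; have [_ [_ _ _ h1 _]] := hw.
by rewrite /w_d h1 ?mulr0 // ler_pdivlMr // mul1r distrC.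
Qed.

Lemma A2s_meas {R : realType} {w : R -> R} d x : A1 w -> 0 < d -> 0 < x < 1 ->
  A2s w d ->
  2 * fine (@lebesgue_measure R
    (((fun y => `|y - x|) @^-1` `]0, d[ `&`
      (fun y => w_d w d x y) @^-1` `]-oo, b_d w d x[) `&` `]0, 1[))
  <= fine (@lebesgue_measure R ((fun y => `|y - x|) @^-1` `]0, d[ `&` `]0, 1[)).
Proof.
move=> hw d0 x01 hA.
set b := b_d w d x.
set dist := fun y : R => `|y - x|.
set wd := fun y => w_d w d x y.
have mwd : measurable_fun setT wd := measurable_wd d x hw d0.
have b0 : 0 <= b by apply: b_ge0.
set NO := dist @^-1` `]0, d[.
set P := NO `&` wd @^-1` `]-oo, b[.
set O := dist @^-1` `[d, +oo[.
set D := `]0, 1[%classic : set R.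
have mD : measurable D by exact: measurable_itv.
have mNO : measurable NO by exact: mdist.
have mO : measurable O by exact: mdist.
have mP : measurable P.
  apply: measurableI => //; rewrite -[X in measurable X]setTI; exact: mwd.
set F := fun y => wd y - b * chi `[0, d] `|y - x|.
have mF : measurable_fun setT F.
  apply: measurable_funB => //; apply: measurable_funM => //; exact: mchi.
have eLe : A2s_le w d x = D `&` F @^-1` `]-oo, 0].
  apply/seteqP; split => y /=; rewrite /A2s_le /D /F /= !in_itv /= => -[] //.
have eGe : A2s_ge w d x = D `&` F @^-1` `[0, +oo[.
  apply/seteqP; split => y /=; rewrite /A2s_ge /D /F /= !in_itv /= ?andbT => -[] //.
have mLe : measurable (A2s_le w d x).
  by rewrite eLe; apply: measurableI => //; rewrite -[X in measurable X]setTI; exact: mF.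
have mGe : measurable (A2s_ge w d x).
  by rewrite eGe; apply: measurableI => //; rewrite -[X in measurable X]setTI; exact: mF.
have h := hA x x01.
set Q := (NO `&` D) `\` (P `&` D).
have mQ : measurable Q by apply: measurableD; apply: measurableI.
have mPD : measurable (P `&` D) by apply: measurableI.
have mOD : measurable (O `&` D) by apply: measurableI.
have mND : measurable (NO `&` D) by apply: measurableI.
have s1 : (P `&` D) `|` (O `&` D) `<=` A2s_le w d x.
  rewrite eLe => y [[[hN hb] Dy] | [hO Dy]]; split => //=; rewrite /F in_itv /=.
  - move: hN hb; rewrite /NO /dist /= !in_itv /= => /andP[h1 h2] hb.
    rewrite /chi indic1; last by rewrite /= in_itv /= ltW //= ltW.
    by rewrite mulr1 subr_le0 ltW.
  - move: hO; rewrite /O /dist /= !in_itv /= andbT => hO.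
    have /andP[c0 _] := chi_le1 `[0, d] `|y - x|.
    by rewrite /wd (wd_far d x _ hw d0 hO) sub0r oppr_le0 mulr_ge0.
have s2 : A2s_ge w d x `<=` (Q `|` (O `&` D)) `|` [set x].
  rewrite eGe => y [Dy Fy]; have [->|yx] := eqVneq y x; first by right.
  left; have [hd|hd] := leP d (dist y).
    by right; split => //; rewrite /O /= in_itv /= andbT.
  left; split.
    split => //; rewrite /NO /= in_itv /= hd andbT normr_gt0 subr_eq0 //.
  move=> [[_ hb] _]; move: hb Fy; rewrite /= !in_itv /= /F => hb.
  rewrite /chi indic1; last by rewrite /= in_itv /= normr_ge0 ltW.
  by rewrite mulr1 subr_ge0 leNgt hb.
have lemu A B : measurable A -> measurable B -> A `<=` B ->
    (@lebesgue_measure R A <= @lebesgue_measure R B)%E.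
  by move=> mA mB AB; apply: le_measure => //; rewrite inE.
have e1 : @lebesgue_measure R ((P `&` D) `|` (O `&` D)) =
    (@lebesgue_measure R (P `&` D) + @lebesgue_measure R (O `&` D))%E.
  apply: measureU => //; apply/seteqP; split => y //=.
  rewrite /P /NO /O /dist /= !in_itv /= andbT.
  by move=> [[[/andP[_ h1] _] _] [h2 _]]; move: (lt_le_trans h1 h2); rewrite ltxx.
have e2 : @lebesgue_measure R (NO `&` D) =
    (@lebesgue_measure R Q + @lebesgue_measure R (P `&` D))%E.
  rewrite -measureU //; last by rewrite setDKI.
  by rewrite setDKU // => y [[hN _] Dy]; split.
have i1 : (@lebesgue_measure R (P `&` D) + @lebesgue_measure R (O `&` D) <=
    @lebesgue_measure R Q + @lebesgue_measure R (O `&` D))%E.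
  rewrite -e1; apply: le_trans (lemu _ _ _ _ s1) _ => //.
    by apply: measurableU.
  apply: le_trans h _; apply: le_trans (lemu _ _ _ _ s2) _ => //.
    by apply: measurableU => //; apply: measurableU.
  apply: le_trans (measureU2 _ _ _) _ => //; first by apply: measurableU.
  have hx0 : (@lebesgue_measure R [set x] <= 0)%E.
    by rewrite le_eqVlt; apply/orP; left; apply/eqP; exact: lebesgue_measure_set1.
  apply: le_trans (leeD2l _ hx0) _; rewrite adde0; exact: measureU2.
have fP : @lebesgue_measure R (P `&` D) \is a fin_num by apply: finD => // y [].
have fO : @lebesgue_measure R (O `&` D) \is a fin_num by apply: finD => // y [].
have fQ : @lebesgue_measure R Q \is a fin_num by apply: finD => // y [[]].
rewrite leeD2rE // in i1.
rewrite e2 fineD // mulr2n mulrDl mul1r lerD2r.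
exact: fine_le.
Qed.

Lemma mu_itv_oo {R : realType} (a b : R) : a <= b ->
  (@lebesgue_measure R `]a, b[ = (b - a)%:E)%E.
Proof.
move=> ab; rewrite lebesgue_measure_itv /=.
case: ltP => [ab'|ba] //=.
rewrite lee_fin in ba.
have -> : b = a by apply/le_anti; rewrite ba ab.
by rewrite subrr.
Qed.

Lemma ring_lb {R : realType} (x r1 r2 : R) (B : set R) : 0 < x < 1 ->
  0 <= r1 <= r2 -> r2 < 1 / 2 -> measurable B ->
  (forall t, r1 < t < r2 -> B t) ->
  r2 - r1 <= fine (@lebesgue_measure R
     ((fun y => `|y - x|) @^-1` B `&` `]0, 1[)).
Proof.
move=> /andP[x0 x1] /andP[r10 r12] r2h mB hB.
have mS : measurable ((fun y : R => `|y - x|) @^-1` B `&` `]0, 1[%classic).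
  by apply: measurableI; [exact: mdist | exact: measurable_itv].
have fS : @lebesgue_measure R ((fun y : R => `|y - x|) @^-1` B `&` `]0, 1[%classic)
   \is a fin_num by apply: finD => // y [].
have [xh|xh] := leP x (1 / 2).
  have sub : `]x + r1, x + r2[%classic `<=`
      (fun y : R => `|y - x|) @^-1` B `&` `]0, 1[%classic.
    move=> y /=; rewrite in_itv /= => /andP[h1 h2]; split => /=.
      by apply: hB; rewrite ger0_norm; lra.
    by rewrite in_itv /=; apply/andP; split; lra.
  have h0 := @le_measure _ _ _ (@lebesgue_measure R) _ _ (mem_set (measurable_itv _)) (mem_set mS) sub.
  have h : ((r2 - r1)%:E <= @lebesgue_measure R
     ((fun y : R => `|y - x|%R) @^-1` B `&` `]0%R, 1%R[%classic))%E.
    rewrite (_ : r2 - r1 = x + r2 - (x + r1)); last by ring.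
    rewrite -mu_itv_oo; [exact: h0 | lra].
  by exact: (fine_le _ fS h).
have sub : `]x - r2, x - r1[%classic `<=`
    (fun y : R => `|y - x|) @^-1` B `&` `]0, 1[%classic.
  move=> y /=; rewrite in_itv /= => /andP[h1 h2]; split => /=.
    by apply: hB; rewrite ler0_norm; lra.
  by rewrite in_itv /=; apply/andP; split; lra.
have h0 := @le_measure _ _ _ (@lebesgue_measure R) _ _ (mem_set (measurable_itv _)) (mem_set mS) sub.
have h : ((r2 - r1)%:E <= @lebesgue_measure R
   ((fun y : R => `|y - x|%R) @^-1` B `&` `]0%R, 1%R[%classic))%E.
  rewrite (_ : r2 - r1 = x - r1 - (x - r2)); last by ring.
  rewrite -mu_itv_oo; [exact: h0 | lra].
by exact: (fine_le _ fS h).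
Qed.

Lemma ring_ub {R : realType} (x r1 r2 : R) : 0 <= r1 <= r2 ->
  fine (@lebesgue_measure R
     ((fun y => `|y - x|) @^-1` `]r1, r2[ `&` `]0, 1[)) <= 2 * (r2 - r1).
Proof.
move=> /andP[r10 r12].
have mS : measurable ((fun y : R => `|y - x|) @^-1` `]r1, r2[ `&` `]0, 1[%classic).
  by apply: measurableI; [exact: mdist | exact: measurable_itv].
have fS : @lebesgue_measure R ((fun y : R => `|y - x|) @^-1` `]r1, r2[ `&` `]0, 1[%classic)
   \is a fin_num by apply: finD => // y [].
have sub : (fun y : R => `|y - x|) @^-1` `]r1, r2[ `&` `]0, 1[%classic `<=`
    `]x - r2, x - r1[%classic `|` `]x + r1, x + r2[%classic.
  move=> y [] /=; rewrite !in_itv /= => /andP[h1 h2] _.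
  have [yx|yx] := leP x y.
    by right; move: h1 h2; rewrite ger0_norm ?subr_ge0 // => h1 h2; apply/andP; split; lra.
  by left; move: h1 h2; rewrite ltr0_norm ?subr_lt0 // => h1 h2; apply/andP; split; lra.
have h0 := @le_measure _ _ _ (@lebesgue_measure R) _ _ (mem_set mS)
  (mem_set (measurableU _ _ (measurable_itv _) (measurable_itv _))) sub.
have h1 : (@lebesgue_measure R (`](x - r2)%R, (x - r1)%R[%classic `|` `](x + r1)%R, (x + r2)%R[%classic) <=
    @lebesgue_measure R `](x - r2)%R, (x - r1)%R[%classic + @lebesgue_measure R `](x + r1)%R, (x + r2)%R[%classic)%E.
  exact: measureU2.
have h : (@lebesgue_measure R
     ((fun y : R => `|y - x|%R) @^-1` `]r1, r2[ `&` `]0%R, 1%R[%classic) <=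
     (2 * (r2 - r1))%:E)%E.
  apply: le_trans h0 _; apply: le_trans h1 _.
  rewrite mu_itv_oo; last by lra.
  rewrite mu_itv_oo; last by lra.
  by rewrite -EFinD lee_fin; lra.
by have := fine_le fS _ h; apply.
Qed.

Lemma int_cind {R : realType} (a : R) (A : set R) : measurable A ->
  (@lebesgue_measure R).-integrable `]0, 1[ (EFin \o (fun y => a * \1_A y)).
Proof.
move=> mA; apply: (@integ_bd _ _ _ `|a|) => //; first exact: muD_fin.
  by apply: measurable_funM => //; exact: measurable_indic.
move=> y _; rewrite normrM -[leRHS]mulr1 ler_wpM2l //.
by rewrite indicE; case: (_ \in _); rewrite ?normr1 ?normr0.
Qed.

Lemma Rint_cind {R : realType} (a : R) (A : set R) : measurable A ->
  Rintegral (@lebesgue_measure R) `]0, 1[ (fun y => a * \1_A y) =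
  a * fine (@lebesgue_measure R (A `&` `]0, 1[)).
Proof.
move=> mA; rewrite RintegralZl //; last first.
  apply: (@integ_bd _ _ _ 1) => //; first exact: muD_fin.
  by move=> y _; rewrite indicE; case: (_ \in _); rewrite ?normr1 ?normr0.
by rewrite Rint_indic.
Qed.

Lemma int_wd {R : realType} {w : R -> R} d x : A1 w -> 0 < d ->
  (@lebesgue_measure R).-integrable `]0, 1[ (EFin \o (fun y => w_d w d x y)).
Proof.
move=> hw d0; apply: (@integ_bd _ _ _ (d ^- 3 * w 0)) => //; first exact: muD_fin.
  exact: measurable_wd.
by move=> y _; rewrite ger0_norm ?wd_ge0 ?wd_le.
Qed.

Lemma int_wt {R : realType} {w : R -> R} d x : A1 w -> 0 < d ->
  (@lebesgue_measure R).-integrable `]0, 1[ (EFin \o (fun y => wt_d w d x y)).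
Proof.
move=> hw d0; set K := d ^- 3 * w 0.
have mwd := measurable_wd d x hw d0.
apply: (@integ_bd _ _ _ (K + `|b_d w d x|)) => //; first exact: muD_fin.
  rewrite /wt_d; apply: measurableT_comp => //; apply: measurable_funB => //.
  by apply: measurable_funM => //; exact: mchi.
move=> y _; rewrite /wt_d normr_id (le_trans (ler_normB _ _)) // lerD //.
  by rewrite ger0_norm ?wd_ge0 ?wd_le.
rewrite normrM; have /andP[c0 c1] := chi_le1 `]0, d[ `|y - x|.
by rewrite -[leRHS]mulr1 ler_wpM2l // ger0_norm.
Qed.

Lemma mwt {R : realType} {w : R -> R} d x : A1 w -> 0 < d ->
  measurable_fun setT (fun y => wt_d w d x y).
Proof.
move=> hw d0; have mwd := measurable_wd d x hw d0.
rewrite /wt_d; apply: measurableT_comp => //; apply: measurable_funB => //.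
by apply: measurable_funM => //; exact: mchi.
Qed.

Lemma wt_bd {R : realType} {w : R -> R} d x y : A1 w -> 0 < d ->
  `|wt_d w d x y| <= d ^- 3 * w 0 + `|b_d w d x|.
Proof.
move=> hw d0.
rewrite /wt_d normr_id (le_trans (ler_normB _ _)) // lerD //.
  by rewrite ger0_norm ?wd_ge0 ?wd_le.
rewrite normrM; have /andP[c0 c1] := chi_le1 `]0, d[ `|y - x|.
by rewrite -[leRHS]mulr1 ler_wpM2l // ger0_norm.
Qed.

Lemma int_g {R : realType} {w : R -> R} d x : A1 w -> 0 < d ->
  (@lebesgue_measure R).-integrable `]0, 1[
     (EFin \o (fun y => w_d w d x y - wt_d w d x y)).
Proof.
move=> hw d0; set K := d ^- 3 * w 0.
apply: (@integ_bd _ _ _ (K + (K + `|b_d w d x|))) => //; first exact: muD_fin.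
  apply: measurable_funB; [exact: measurable_wd | exact: mwt].
move=> y _; rewrite (le_trans (ler_normB _ _)) // lerD ?wt_bd //.
by rewrite ger0_norm ?wd_ge0 ?wd_le.
Qed.

Lemma int_lin2 {R : realType} (a1 a2 : R) (A1 A2 : set R) :
  measurable A1 -> measurable A2 ->
  (@lebesgue_measure R).-integrable `]0, 1[
    (EFin \o (fun y => a1 * \1_A1 y - a2 * \1_A2 y)).
Proof.
move=> m1 m2; apply: (@integ_bd _ _ _ (`|a1| + `|a2|)) => //; first exact: muD_fin.
  by apply: measurable_funB; apply: measurable_funM => //; exact: measurable_indic.
move=> y _; rewrite (le_trans (ler_normB _ _)) // lerD // normrM -[leRHS]mulr1.
  by rewrite ler_wpM2l // indicE; case: (_ \in _); rewrite ?normr1 ?normr0.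
by rewrite ler_wpM2l // indicE; case: (_ \in _); rewrite ?normr1 ?normr0.
Qed.

Lemma int_lin3 {R : realType} (a1 a2 a3 : R) (A1 A2 A3 : set R) :
  measurable A1 -> measurable A2 -> measurable A3 ->
  (@lebesgue_measure R).-integrable `]0, 1[
    (EFin \o (fun y => a1 * \1_A1 y - a2 * \1_A2 y + a3 * \1_A3 y)).
Proof.
move=> m1 m2 m3; apply: (@integ_bd _ _ _ (`|a1| + `|a2| + `|a3|)) => //; first exact: muD_fin.
  apply: measurable_funD; first (apply: measurable_funB); apply: measurable_funM => //; exact: measurable_indic.
move=> y _; rewrite (le_trans (ler_normD _ _)) // lerD //.
  rewrite (le_trans (ler_normB _ _)) // lerD // normrM -[leRHS]mulr1.
    by rewrite ler_wpM2l // indicE; case: (_ \in _); rewrite ?normr1 ?normr0.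
  by rewrite ler_wpM2l // indicE; case: (_ \in _); rewrite ?normr1 ?normr0.
rewrite normrM -[leRHS]mulr1.
by rewrite ler_wpM2l // indicE; case: (_ \in _); rewrite ?normr1 ?normr0.
Qed.

Lemma Rint_lin3 {R : realType} (a1 a2 a3 : R) (A1 A2 A3 : set R) :
  measurable A1 -> measurable A2 -> measurable A3 ->
  Rintegral (@lebesgue_measure R) `]0, 1[
    (fun y => a1 * \1_A1 y - a2 * \1_A2 y + a3 * \1_A3 y) =
  a1 * fine (@lebesgue_measure R (A1 `&` `]0, 1[))
  - a2 * fine (@lebesgue_measure R (A2 `&` `]0, 1[))
  + a3 * fine (@lebesgue_measure R (A3 `&` `]0, 1[)).
Proof.
move=> m1 m2 m3.
have mD : measurable (`]0, 1[%classic : set R) by exact: measurable_itv.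
rewrite RintegralD //; last exact: int_cind.
  rewrite RintegralB //; try exact: int_cind.
  by rewrite !Rint_cind.
exact: int_lin2.
Qed.

Lemma core {R : realType} {w : R -> R} d x : A1 w -> 0 < d -> d < 1 / 2 ->
  0 < x < 1 -> A2s w d -> 0 < b_d w d x ->
  (b_d w d x * (d / 4) <=
     Rintegral (@lebesgue_measure R) `]0, 1[ (fun y => w_d w d x y - wt_d w d x y)) \/
  (d ^- 3 * w (7 / 8) * (d / 4) <=
     Rintegral (@lebesgue_measure R) `]0, 1[ (fun y => w_d w d x y - wt_d w d x y)).
Proof.
move=> hw d0 dh x01 hA bpos.
set b := b_d w d x.
set dist := fun y : R => `|y - x|.
set wd := fun y => w_d w d x y.
have mwd : measurable_fun setT wd := measurable_wd d x hw d0.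
have mD : measurable (`]0, 1[%classic : set R) by exact: measurable_itv.
have ig := int_g d x hw d0.
set NO := dist @^-1` `]0, d[.
have mNO : measurable NO by exact: mdist.
have wt_eq y : wt_d w d x y = `|wd y - b * \1_NO y|.
  by rewrite /wt_d /chi.
have [[y0 [hy0 hb0]]|hno] := pselect (exists y0, `|y0 - x| <= 3 * d / 4 /\ wd y0 < b).
  right.
  set c := d ^- 3 * w (7 / 8).
  set P := NO `&` wd @^-1` `]-oo, b[.
  set T' := dist @^-1` `]3 * d / 4, 7 * d / 8[.
  have mP : measurable P.
    apply: measurableI => //; rewrite -[X in measurable X]setTI; exact: mwd.
  have mT' : measurable T' by exact: mdist.
  have c0 : 0 <= c.
    rewrite /c mulr_ge0 ?invr_ge0 ?exprn_ge0 ?(ltW d0) //.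
    by apply: (w_ge0 hw); lra.
  have hle : Rintegral (@lebesgue_measure R) `]0, 1[
      (fun y => b * \1_NO y - 2 * b * \1_P y + 2 * c * \1_T' y) <=
     Rintegral (@lebesgue_measure R) `]0, 1[ (fun y => w_d w d x y - wt_d w d x y).
    apply: le_Rintegral => //; first exact: int_lin3.
    move=> y _; rewrite wt_eq.
    have wd0 : 0 <= wd y by apply: wd_ge0.
    have [hN|hN] := pselect (NO y); last first.
      rewrite (indic0 _ _ hN) mulr0 subr0 ger0_norm // subrr.
      rewrite (indic0 P y); last by case.
      rewrite (indic0 T' y); last first.
        move: hN; rewrite /T' /NO /= !in_itv /= => hN /andP[h1 h2]; apply: hN.
        apply/andP; split; lra.
      by rewrite !mulr0 subrr addr0.
    rewrite (indic1 _ _ hN) mulr1.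
    have [hlt|hge] := ltP (wd y) b.
      rewrite (indic1 P y); last by split.
      rewrite ltr0_norm ?subr_lt0 // opprB mulr1.
      have : c * \1_T' y <= wd y.
        have [hT|hT] := pselect (T' y); last by rewrite (indic0 _ _ hT) mulr0.
        rewrite (indic1 _ _ hT) mulr1; apply: wd_lb => //.
        move: hT; rewrite /T' /= in_itv /= distrC => /andP[_ h]; rewrite /dist /= in h; lra.
      change (w_d w d x y) with (wd y); lra.
    rewrite (indic0 P y); last by move=> [_ /=]; rewrite in_itv /= ltNge hge.
    rewrite (indic0 T' y); last first.
      rewrite /T' /= in_itv /= => /andP[h1 _].
      have : wd y <= wd y0.
        apply: wd_mono => //; rewrite distrC (distrC x); rewrite /dist /= in h1; lra.
      lra.
    rewrite ger0_norm ?subr_ge0 // !mulr0 subr0 addr0 opprB addrC subrK //.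
  rewrite Rint_lin3 // in hle.
  apply: le_trans hle.
  have hP : 2 * fine (@lebesgue_measure R (P `&` `]0, 1[)) <=
      fine (@lebesgue_measure R (NO `&` `]0, 1[)) by exact: A2s_meas.
  have hT : d / 8 <= fine (@lebesgue_measure R (T' `&` `]0, 1[)).
    have := @ring_lb R x (3 * d / 4) (7 * d / 8) `]3 * d / 4, 7 * d / 8[ x01.
    rewrite (_ : 7 * d / 8 - 3 * d / 4 = d / 8); last by field.
    apply => //; [apply/andP; split; lra | lra].
  have h1 : 0 <= b * (fine (@lebesgue_measure R (NO `&` `]0, 1[)) -
      2 * fine (@lebesgue_measure R (P `&` `]0, 1[)))
    by apply: mulr_ge0; [exact: ltW| lra].
  have h2 := @ler_wpM2l _ c c0 _ _ hT.
  nra.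
left.
set Nr := dist @^-1` `]0, 3 * d / 4[.
set T := dist @^-1` `]3 * d / 4, d[.
have mNr : measurable Nr by exact: mdist.
have mT : measurable T by exact: mdist.
have hle : Rintegral (@lebesgue_measure R) `]0, 1[ (fun y => b * \1_Nr y - b * \1_T y) <=
     Rintegral (@lebesgue_measure R) `]0, 1[ (fun y => w_d w d x y - wt_d w d x y).
  apply: le_Rintegral => //.
    apply: (@integ_bd _ _ _ (`|b| + `|b|)) => //; first exact: muD_fin.
      by apply: measurable_funB; apply: measurable_funM => //; exact: measurable_indic.
    move=> y _; rewrite (le_trans (ler_normB _ _)) // lerD // normrM -[leRHS]mulr1.
      by rewrite ler_wpM2l // indicE; case: (_ \in _); rewrite ?normr1 ?normr0.
    by rewrite ler_wpM2l // indicE; case: (_ \in _); rewrite ?normr1 ?normr0.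
  move=> y _; rewrite wt_eq.
  have wd0 : 0 <= wd y by apply: wd_ge0.
  have [hN|hN] := pselect (NO y); last first.
    rewrite (indic0 _ _ hN) mulr0 subr0 ger0_norm // subrr.
    rewrite indic0; last by move: hN; rewrite /Nr /NO /= !in_itv /= => hN /andP[h1 h2]; apply: hN; apply/andP; split => //; lra.
    rewrite indic0; last by move: hN; rewrite /T /NO /= !in_itv /= => hN /andP[h1 h2]; apply: hN; apply/andP; split => //; lra.
    by rewrite mulr0 subrr.
  rewrite (indic1 _ _ hN) mulr1.
  move: hN; rewrite /NO /= in_itv /= => /andP[hN1 hN2].
  have [h34|h34] := leP (dist y) (3 * d / 4).
    have hb : b <= wd y.
      rewrite leNgt; apply/negP => hlt; apply: hno; exists y; split => //.
    rewrite (indic0 T y); last by rewrite /T /= in_itv /= => /andP[h1 h2]; have := lt_le_trans h1 h34; rewrite ltxx.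
    rewrite mulr0 subr0 ger0_norm ?subr_ge0 // opprB addrC subrK.
    by rewrite indicE; case: (_ \in _); rewrite ?mulr1 ?mulr0 ?lexx // ltW.
  rewrite indic0; last by rewrite /Nr /= in_itv /= => /andP[h1 h2]; have := lt_trans h2 h34; rewrite ltxx.
  rewrite indic1; last by rewrite /T /= in_itv /=; apply/andP; split.
  have := ler_normB (wd y) b; rewrite (ger0_norm wd0) (gtr0_norm bpos) => hn.
  rewrite mulr0 mulr1 sub0r; rewrite -/b in hn; change (w_d w d x y) with (wd y); lra.
rewrite [X in X <= _]RintegralB // in hle; last 2 first.
    exact: int_cind.
  exact: int_cind.
rewrite !Rint_cind // in hle.
apply: le_trans hle.
have h1 : 3 * d / 4 <= fine (@lebesgue_measure R (Nr `&` `]0, 1[)).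
  have := @ring_lb R x 0 (3 * d / 4) `]0, 3 * d / 4[ x01.
  rewrite subr0; apply => //; [apply/andP; split; lra | lra].
have h2 : fine (@lebesgue_measure R (T `&` `]0, 1[)) <= 2 * (d - 3 * d / 4).
  by apply: ring_ub; apply/andP; split; lra.
have := @ler_wpM2l _ b (ltW bpos) (d / 4) (fine (@lebesgue_measure R (Nr `&` `]0, 1[)) -
   fine (@lebesgue_measure R (T `&` `]0, 1[))).
by rewrite mulrBr; apply; lra.
Qed.

Theorem mainTheorem6 (R : realType) (w : R -> R) :
  A1 w ->
  (forall d : R, 0 < d < 1 / 2 -> A2s w d) ->
  exists C : R, 0 < C /\
    forall d : R, 0 < d < 1 / 2 ->
    forall x : R, 0 < x < 1 ->
      C * d * b_d w d x <=
        a_d w d x - Rintegral (@lebesgue_measure R) `]0, 1[ (fun y => wt_d w d x y).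
Proof.
move=> hw hA.
have w7 : 0 < w (7 / 8).
  have [_ [_ _ hp _ _]] := hw; apply: hp; apply/andP; split; lra.
have w70 : w (7 / 8) <= w 0 by apply: (w_mono hw) => //; lra.
have W0 : 0 < w 0 by exact: lt_le_trans w7 w70.
exists (w (7 / 8) / (8 * w 0)); split.
  by apply: divr_gt0 => //; apply: mulr_gt0.
move=> d /andP[d0 dh] x x01.
rewrite a_minus //.
have b0 := @b_ge0 R w d x hw d0.
have C0 : 0 <= w (7 / 8) / (8 * w 0) by apply: divr_ge0; [exact: ltW | apply: mulr_ge0; [|exact: ltW]].
move: b0; rewrite le_eqVlt => /orP[/eqP bz|bpos].
  rewrite -bz mulr0.
  have -> : (fun y => w_d w d x y - wt_d w d x y) = (fun _ => 0).
    apply/funext => y; rewrite /wt_d -bz mul0r subr0 ger0_norm ?subrr //.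
    exact: wd_ge0.
  by rewrite Rintegral_cst ?mul0r //; exact: measurable_itv.
have dA : 0 < d < 1 / 2 by apply/andP.
have [h|h] := core d x hw d0 dh x01 (hA d dA) bpos; apply: le_trans h.
  have hC : w (7 / 8) / (8 * w 0) <= 1 / 8.
    rewrite ler_pdivrMr ?mulr_gt0 //; lra.
  move: hC C0; set C := w (7 / 8) / (8 * w 0) => hC C0.
  set bb := b_d w d x in bpos *; have dbb : 0 < d * bb by apply: mulr_gt0.
  nra.
have hb := @b_le R w d x hw d0.
apply: (@le_trans _ _ (w (7 / 8) / (8 * w 0) * d * (2 * (d ^- 3 * w 0)))).
  by apply: ler_wpM2l => //; rewrite mulr_ge0 // ltW.
rewrite le_eqVlt; apply/orP; left; apply/eqP.
field; apply/andP; split; rewrite ?gt_eqF //.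
Qed.
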